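(* Let $(M,\cdot,1)$ be a monoid, $\Sigma$ a finite alphabet, and $A=(Q,\Sigma,u,i_u,\delta,w,\rho)$ an $M$-DFA. If $A$ is minimal then: 1. $A$ is accessible; 2. for all $p,q\in Q$: if there exists $m\in M$ with $m\cdot\mathcal{A}_p=\mathcal{A}_q$ or $\mathcal{A}_p=m\cdot\mathcal{A}_q$, then $p=q$; 3. for all $p,q\in Q$: if $\mathcal{A}_p=\mathcal{A}_q$ then $p=q$.
   Context: An $M$-DFA is $A=(Q,\Sigma,u,i_u,\delta,w,\rho)$ with $Q$ finite nonempty, initial state $u$, initial value $i_u\in M$, $\delta:Q\times\Sigma\to Q$, $w:Q\times\Sigma\to M$, $\rho:Q\to M$. Write $q\alpha$ for the extension of $\delta$ to words ($q\varepsilon=q$, $q(\alpha\sigma)=\delta(q\alpha,\sigma)$) and $w^*(q,\varepsilon)=1$, $w^*(q,\alpha\sigma)=w^*(q,\alpha)\cdot w(q\alpha,\sigma)$. $A$ recognizes $\mathcal{A}(\alpha)=i_u\cdot w^*(u,\alpha)\cdot\rho(u\alpha)$, and for $q\in Q$, $\mathcal{A}_q(\alpha)=w^*(q,\alpha)\cdot\rho(q\alpha)$. For $m\in M$, $(m\cdot\ell)(\gamma)=m\cdot\ell(\gamma)$. Two $M$-DFAs are equivalent if they recognize the same $M$-language; $A$ is minimal if no equivalent $M$-DFA has fewer states; $A$ is accessible if $Q=\{u\alpha\mid\alpha\in\Sigma^*\}$. *)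

(* Defs.v *)
From mathcomp Require Import all_boot.
Set Implicit Arguments. Unset Strict Implicit. Unset Printing Implicit Defensive.

Record monoid := Monoid {
  mcarrier :> Type;
  mmul : mcarrier -> mcarrier -> mcarrier;
  mone : mcarrier;
  mmulA : forall x y z, mmul x (mmul y z) = mmul (mmul x y) z;
  mmul1l : forall x, mmul mone x = x;
  mmul1r : forall x, mmul x mone = x }.

Record mdfa (M : monoid) (Sigma : Type) (Q : finType) := MDFA {
  init : Q;
  ival : M;
  delta : Q -> Sigma -> Q;
  wt : Q -> Sigma -> M;
  rho : Q -> M }.

Section MDFA.
Variables (M : monoid) (Sigma : Type) (Q : finType) (A : mdfa M Sigma Q).

Definition dstar (q : Q) (a : seq Sigma) : Q := foldl (delta A) q a.

(* w^*(q, eps) = 1, w^*(q, alpha sigma) = w^*(q, alpha) . w(q alpha, sigma) *)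
Fixpoint wstar_aux (acc : M) (q : Q) (a : seq Sigma) : M :=
  match a with
  | [::] => acc
  | s :: a' => wstar_aux (mmul acc (wt A q s)) (delta A q s) a'
  end.
Definition wstar (q : Q) (a : seq Sigma) : M := wstar_aux (mone M) q a.

Definition state_lang (q : Q) : seq Sigma -> M :=
  fun a => mmul (wstar q a) (rho A (dstar q a)).

Definition recognized : seq Sigma -> M :=
  fun a => mmul (ival A) (mmul (wstar (init A) a) (rho A (dstar (init A) a))).

Definition accessible : Prop := forall q : Q, exists a : seq Sigma, dstar (init A) a = q.

End MDFA.

Definition lscale (M : monoid) (Sigma : Type) (m : M) (l : seq Sigma -> M) :
  seq Sigma -> M := fun g => mmul m (l g).

Definition mdfa_equiv (M : monoid) (Sigma : Type) (Q1 Q2 : finType)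
  (A : mdfa M Sigma Q1) (B : mdfa M Sigma Q2) : Prop :=
  forall a, recognized A a = recognized B a.

Definition minimal (M : monoid) (Sigma : Type) (Q : finType) (A : mdfa M Sigma Q) : Prop :=
  forall (Q' : finType) (B : mdfa M Sigma Q'), mdfa_equiv A B -> #|Q| <= #|Q'|.

(* Main.v *)
Require Import Defs.
From mathcomp Require Import all_boot.
From mathcomp Require Import zify.
From Stdlib Require Import ClassicalEpsilon FunctionalExtensionality.
Set Implicit Arguments. Unset Strict Implicit. Unset Printing Implicit Defensive.

Section Gen.
Variables (M : monoid) (Sigma : Type) (Q : finType) (A : mdfa M Sigma Q).

Lemma wstar_auxE (acc : M) q a : wstar_aux A acc q a = mmul acc (wstar A q a).
Proof.
elim: a acc q => [|s a IH] acc q /=; first by rewrite /wstar /= mmul1r.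
rewrite /wstar /= IH [in RHS]IH mmulA mmul1l //.
Qed.

Lemma state_lang_cons q s a :
  state_lang A q (s :: a) = mmul (wt A q s) (state_lang A (delta A q s) a).
Proof.
rewrite /state_lang /wstar /= wstar_auxE mmul1l -mmulA //.
Qed.

End Gen.
Section Gen2.
Variables (M : monoid) (Sigma : Type) (Q : finType) (A : mdfa M Sigma Q).
Variables (P : pred Q) (f : Q -> Q) (g : Q -> M).
Hypothesis Hd : forall x s, P x -> P (f (delta A x s)).
Hypothesis Hu : P (f (init A)).
Hypothesis Hgd : forall x s, P x -> forall a,
  mmul (g (delta A x s)) (state_lang A (f (delta A x s)) a) = state_lang A (delta A x s) a.
Hypothesis Hgu : forall a,
  mmul (g (init A)) (state_lang A (f (init A)) a) = state_lang A (init A) a.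

Definition Bm : mdfa M Sigma {x : Q | P x} :=
  @MDFA M Sigma {x : Q | P x}
    (exist _ (f (init A)) Hu)
    (mmul (ival A) (g (init A)))
    (fun x s => exist _ (f (delta A (val x) s)) (Hd s (valP x)))
    (fun x s => mmul (wt A (val x) s) (g (delta A (val x) s)))
    (fun x => rho A (val x)).

Lemma Bm_lang x a : state_lang Bm x a = state_lang A (val x) a.
Proof.
elim: a x => [|s a IH] x; first by rewrite /state_lang /wstar /= !mmul1l.
rewrite !state_lang_cons IH /= -mmulA Hgd //; exact: valP.
Qed.

Lemma Bm_equiv : mdfa_equiv A Bm.
Proof.
move=> a; rewrite /recognized.
have -> : mmul (wstar Bm (init Bm) a) (rho Bm (dstar Bm (init Bm) a))
   = state_lang Bm (init Bm) a by [].
rewrite Bm_lang /= -mmulA; congr mmul; exact: (esym (Hgu a)).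
Qed.

End Gen2.

Lemma merge_lemma (M : monoid) (Sigma : Type) (Q : finType)
  (A : mdfa M Sigma Q) (p q : Q) (m : M) :
  minimal A -> p != q ->
  (forall a, mmul m (state_lang A p a) = state_lang A q a) -> False.
Proof.
move=> Hmin Hpq Hm.
pose P := fun x : Q => x != q.
pose f := fun x : Q => if x == q then p else x.
pose g := fun x : Q => if x == q then m else mone M.
have HP : forall x, P (f x).
  by move=> x; rewrite /P /f; case: ifP => [_|/negbT].
have Hg : forall x a, mmul (g x) (state_lang A (f x) a) = state_lang A x a.
  move=> x a; rewrite /g /f; case: ifP => [/eqP ->|_]; first exact: Hm.
  by rewrite mmul1l.
have Hd : forall x s, P x -> P (f (delta A x s)) by move=> x s _; apply: HP.
have := Hmin _ (Bm (P:=P) (f:=f) g Hd (HP (init A))).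
move=> /(_ (Bm_equiv Hd (HP (init A)) (fun x s _ a => Hg (delta A x s) a) (Hg (init A)))).
rewrite card_sig.
have -> : #|[pred x | P x]| = #|predC1 q| by apply: eq_card.
rewrite cardC1.
have : 0 < #|Q| by apply/card_gt0P; exists q.
lia.
Qed.

Theorem mainTheorem8 (M : monoid) (Sigma : finType) (Q : finType)
  (A : mdfa M Sigma Q) :
  minimal A ->
  [/\ accessible A,
      (forall p q : Q,
         (exists m : M, lscale m (state_lang A p) = state_lang A q
                        \/ state_lang A p = lscale m (state_lang A q)) ->
         p = q)
    & (forall p q : Q, state_lang A p = state_lang A q -> p = q)].
Proof.
move=> Hmin.
have H2 : forall p q : Q,
         (exists m : M, lscale m (state_lang A p) = state_lang A q
                        \/ state_lang A p = lscale m (state_lang A q)) ->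
         p = q.
  move=> p q [m [E|E]]; case: (eqVneq p q) => // Hpq; exfalso.
  - by apply: (merge_lemma Hmin Hpq) => a; rewrite -E.
  - by apply: (merge_lemma (m:=m) Hmin (q:=p) (p:=q)); [rewrite eq_sym | move=> a; rewrite E].
split => //.
- pose P := fun x : Q => if excluded_middle_informative
                  (exists a, dstar A (init A) a = x) then true else false.
  have PP : forall x, P x <-> exists a, dstar A (init A) a = x.
    by move=> x; rewrite /P; case: excluded_middle_informative.
  pose f := fun x : Q => if P x then x else init A.
  have Hd : forall x s, P x -> P (f (delta A x s)).
    move=> x s /PP [a Ha]; rewrite /f.
    have : P (delta A x s).
      by apply/PP; exists (rcons a s); rewrite /dstar foldl_rcons -/(dstar A _ a) Ha.
    by move=> H; case: ifP => // ; rewrite H.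
  have Pu : P (init A) by apply/PP; exists [::].
  have Hu : P (f (init A)) by rewrite /f Pu.
  have := Hmin _ (Bm (P:=P) (f:=f) (fun _ => mone M) Hd Hu).
  have Be : mdfa_equiv A (Bm (P:=P) (f:=f) (fun _ => mone M) Hd Hu).
    apply: Bm_equiv.
    + move=> x s Px a; rewrite mmul1l /f.
      have [a0 Ha0] := (PP x).1 Px.
      have H : P (delta A x s) by apply/PP; exists (rcons a0 s);
        rewrite /dstar foldl_rcons -/(dstar A _ a0) Ha0.
      by case: ifP => //; rewrite H.
    + by move=> a; rewrite mmul1l /f Pu.
  move=> /(_ Be); rewrite card_sig => Hc x.
  apply/PP.
  have Hc0 : #|[predC [pred x | P x]]| = 0.
    have := cardC [pred x | P x]; move: Hc; set k := #|_|; set k2 := #|predC _|. lia.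
  have := card0_eq Hc0 x; rewrite !inE /=.
  by case: (P x).
- move=> p q E; apply: H2; exists (mone M); left.
  by rewrite -E; apply: functional_extensionality_dep => a; rewrite /lscale mmul1l.
Qed.
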